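(* Let $n,k,t$ be integers with $1\le t<k\le n$, and let $m\ge 1$. Consider the $(n,k,t)$ Staircase-PIR scheme described in the context, used by a user who wants file $f_i$, $i\in\{1,\dots,m\}$. Then: (1) Privacy: for every set $T\subseteq\{1,\dots,n\}$ with $|T|=t$, the joint distribution of the queries $(\mathbf{q}_l)_{l\in T}$ does not depend on $i$; equivalently, if the index $i$ is a random variable $\texttt{I}$ independent of the random vectors, then $H(\texttt{I}\mid \texttt{Q}_T)=H(\texttt{I})$. (2) Universal robustness and optimality: for every $\mu$ with $k\le\mu\le n$ and every set $L\subseteq\{1,\dots,n\}$ with $|L|=\mu$, the user can compute all $\alpha'$ parts of $f_i$ from the responses of the servers in $L$ to their first $\alpha'/(\mu-t)$ sub-queries only. Hence, when waiting for any $\mu$ servers, the user downloads $\mu\alpha'/(\mu-t)$ symbols to retrieve the $\alpha'$ symbols of the file, i.e. the scheme achieves rate $$\frac{\alpha'}{\mu\,\alpha'/(\mu-t)}=1-\frac{t}{\mu}=C(t,\mu)$$ simultaneously for all $\mu\in\{k,\dots,n\}$.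
   Context: Setting: $m$ files are replicated on $n$ servers; a user wants file $f_i$ while any $t$ colluding servers must learn nothing about $i$. All arithmetic is over a finite field $GF(q)$ with $q>n$. Parameters: for $j=1,\dots,n-k+1$ let $\mu_j=n-j+1$ and $\alpha_j=\mu_j-t$ (so $\alpha_{j-1}-\alpha_j=1$; set $\alpha_0=1$). Let $\alpha=\mathrm{lcm}(\alpha_1,\dots,\alpha_{n-k})$ (with $\alpha=1$ if $n=k$) and $\alpha'=(k-t)\alpha$. Each file is split into $\alpha'$ symbols and the data is the vector $\mathbf{x}=[x_1,\dots,x_{\alpha' m}]^T\in GF(q)^{\alpha' m}$ with $f_i=[x_i,x_{m+i},\dots,x_{(\alpha'-1)m+i}]$. Let $\mathbf{e}_p$ be the $p$-th standard basis vector of $GF(q)^{\alpha' m}$ and $\mathbf{e}'_j=\mathbf{e}_{(j-1)m+i}$, so $f_i=[\mathbf{e}_1'^T\mathbf{x},\dots,\mathbf{e}_{\alpha'}'^T\mathbf{x}]$. Construction of the queries: the user draws i.i.d. random vectors uniformly from $GF(q)^{\alpha' m}$, independent of $i$. All matrices below have entries that are vectors in $GF(q)^{\alpha' m}$. Let $\mathcal{E}$ be the $\alpha_1\times(\alpha'/\alpha_1)$ matrix containing $\mathbf{e}'_1,\dots,\mathbf{e}'_{\alpha'}$ (filled column by column). For $j=1,\dots,n-k+1$ let $\mathcal{R}_j$ be a $t\times \alpha'/(\alpha_{j-1}\alpha_j)$ matrix of fresh random vectors (distinct entries are distinct independent random vectors). Let $\mathcal{M}_1=\begin{bmatrix}\mathcal{E}\\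 \mathcal{R}_1\end{bmatrix}$ (an $n\times \alpha'/\alpha_1$ matrix). For $l=1,\dots,n-k$, let $\mathcal{D}_l$ be the $\alpha_{l+1}\times \alpha'/(\alpha_l\alpha_{l+1})$ matrix obtained by taking the $(n-l+1)$-th row of the concatenation $[\mathcal{M}_1\ \mathcal{M}_2\ \cdots\ \mathcal{M}_l]$ (which has exactly $\alpha'/\alpha_l$ entries) and writing its entries into $\mathcal{D}_l$ column by column. For $j=2,\dots,n-k+1$ let $\mathcal{M}_j=\begin{bmatrix}\mathcal{D}_{j-1}\\ \mathcal{R}_j\\ \mathbf{0}\end{bmatrix}$, where $\mathbf{0}$ is a $(j-1)\times \alpha'/(\alpha_{j-1}\alpha_j)$ block of zero vectors, so that $\mathcal{M}_j$ has $n$ rows. Let $\mathcal{M}=[\mathcal{M}_1\ \mathcal{M}_2\ \cdots\ \mathcal{M}_{n-k+1}]$, an $n\times\alpha$ matrix. Let $\mathcal{V}$ be the $n\times n$ Vandermonde matrix $\mathcal{V}_{l,c}=a_l^{c-1}$ with $a_1,\dots,a_n$ distinct nonzero elements of $GF(q)$. The query matrix is $\mathcal{Q}=\mathcal{V}\mathcal{M}$; server $l$ receives the query $\mathbf{q}_l$ = row $l$ of $\mathcal{Q}$, consisting of $\alpha$ sub-queries $\mathbf{q}_{l,1},\dots,\mathbf{q}_{l,\alpha}\in GF(q)^{\alpha' m}$, and answers sub-query $c$ with the symbol $\mathbf{q}_{l,c}^T\mathbf{x}$. The rate of retrieval is the number of file symbols divided by the number of downloaded symbols; $C(t,\mu)=1-t/\mu$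 is the asymptotic capacity of PIR with $t$ colluding servers and $\mu$ responding servers. *)

(* Defs.v *)
From HB Require Import structures.
From mathcomp Require Import all_boot all_order all_algebra.
Set Implicit Arguments. Unset Strict Implicit. Unset Printing Implicit Defensive.
Import Order.TTheory GRing.Theory Num.Theory.

(* All indices below are 0-based naturals unless stated otherwise. *)

(* alpha_j = mu_j - t = n - j + 1 - t  for j >= 1, and alpha_0 = 1. *)
Definition al (n t j : nat) : nat := if j == 0%N then 1%N else (n - j + 1 - t)%N.

Definition alpha (n k t : nat) : nat := \big[lcmn/1%N]_(1 <= j < (n - k).+1) al n t j.

(* alpha' = (k - t) alpha : number of symbols per file *)
Definition alpha' (n k t : nat) : nat := ((k - t) * alpha n k t)%N.

(* number of columns of M_j  (j >= 1) : alpha' / (alpha_{j-1} alpha_j) *)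
Definition width (n k t j : nat) : nat := (alpha' n k t %/ (al n t j.-1 * al n t j))%N.

(* number of columns of the concatenation [M_1 ... M_l] *)
Definition ncols (n k t l : nat) : nat := (\sum_(1 <= j < l.+1) width n k t j)%N.

Local Open Scope ring_scope.

Section Staircase.
Variable F : finFieldType.
Variables n k t m : nat.
Local Notation N := (alpha' n k t * m)%N.

(* file index (0-based) *)
Variable i : nat.

(* e'_{j+1} = e_{j m + i + 1} (paper's 1-based indexing); here 0-based:
   the standard basis vector of GF(q)^{alpha' m} at position j*m + i. *)
Definition evec (j : nat) : 'rV[F]_N := \row_(p < N) (nat_of_ord p == j * m + i)%N%:R.

Definition dot (q x : 'rV[F]_N) : F := \sum_(p < N) q 0 p * x 0 p.

(* rnd s c = the random vector in row s (< t) of the random block sitting in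
   (global, 0-based) column c of M. *)
Variable rnd : nat -> nat -> 'rV[F]_N.

(* Mcat l r c = entry (row r, column c) of the concatenation [M_1 ... M_l].
   Block M_j occupies the columns ncols (j-1) <= c < ncols j. *)
Fixpoint Mcat (l : nat) : nat -> nat -> 'rV[F]_N :=
  match l with
  | 0 => fun _ _ => 0
  | l'.+1 => fun r c =>
      if (c < ncols n k t l')%N then Mcat l' r c else
      let c' := (c - ncols n k t l')%N in
      let j := l'.+1 in
      if (r < al n t j)%N then
        (* M_1: block E (filled column by column);
           M_j, j >= 2: block D_{j-1} (row n-j+2 (1-based) of [M_1..M_{j-1}],
           filled column by column) *)
        (if l' is 0 then evec (c' * al n t j + r)
         else Mcat l' (n - j + 1) (c' * al n t j + r))
      else if (r < al n t j + t)%N then rnd (r - al n t j) c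
      else 0
  end.

Definition Mmat (r c : nat) : 'rV[F]_N := Mcat (n - k).+1 r c.

(* query matrix Q = V M with V_{l,r} = a_l^r (0-based r):
   sub-query c of server l *)
Definition query (a : 'I_n -> F) (l : 'I_n) (c : nat) : 'rV[F]_N :=
  \sum_(r < n) (a l ^+ r) *: Mmat r c.

Definition answer (a : 'I_n -> F) (x : 'rV[F]_N) (l : 'I_n) (c : nat) : F :=
  dot (query a l c) x.

End Staircase.

(* The user's randomness: t * alpha i.i.d. uniform vectors, one for each
   (row s < t, global column c < alpha) of the random blocks R_j. *)
Definition rand_t (F : finFieldType) (n k t m : nat) :=
  {ffun 'I_t * 'I_(alpha n k t) -> 'rV[F]_(alpha' n k t * m)}.

Definition Rnat (F : finFieldType) (n k t m : nat) (R : rand_t F n k t m)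
  (s c : nat) : 'rV[F]_(alpha' n k t * m) :=
  match (insub s : option 'I_t), (insub c : option 'I_(alpha n k t)) with
  | Some s', Some c' => R (s', c')
  | _, _ => 0
  end.

Arguments Mcat : clear implicits.
Arguments Mmat : clear implicits.
Arguments query : clear implicits.
Arguments answer : clear implicits.

(* Main.v *)
Require Import Defs.
From HB Require Import structures.
From mathcomp Require Import all_boot all_order all_algebra.
From mathcomp Require Import zify ring.
Import Order.TTheory GRing.Theory Num.Theory.

Module StairHelpers.
Set Implicit Arguments. Unset Strict Implicit.
Set Default Proof Using "All".

Section Arith.
Variables n k t : nat.
Hypothesis htk : (t < k)%N.
Hypothesis hkn : (k <= n)%N.
Local Notation K := (n - k).+1.
Local Notation A := (alpha' n k t).

Lemma al_pos j : (1 <= j <= K)%N -> (0 < al n t j)%N.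
Proof. case: j => [|j]; rewrite /al /=; lia. Qed.

Lemma al_S j : (1 <= j)%N -> (j < K)%N -> al n t j = (al n t j.+1).+1.
Proof. case: j => [|j]; rewrite /al /=; lia. Qed.

Lemma al_K : al n t K = (k - t)%N.
Proof. rewrite /al /=; lia. Qed.

Lemma al_0 : al n t 0 = 1%N.
Proof. by []. Qed.

Lemma big_lcm N : (N <= K)%N ->
  (0 < \big[lcmn/1%N]_(1 <= j < N) al n t j)%N /\
  forall j, (1 <= j < N)%N -> (al n t j %| \big[lcmn/1%N]_(1 <= j < N) al n t j)%N.
Proof.
elim: N => [|N IH] hN.
  by rewrite big_geq //; split => // j; lia.
case: (leqP N 0) => hN0.
  have -> : N = 0%N by lia.
  by rewrite big_geq //; split => // j; lia.
rewrite big_nat_recr /=; last lia.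
have [IH1 IH2] := IH (ltnW hN).
split.
  rewrite lcmn_gt0 IH1 /=; apply: al_pos; lia.
move=> j hj; case: (ltnP j N) => hjN.
  apply: dvdn_trans (dvdn_lcml _ _); apply: IH2; lia.
have -> : j = N by lia.
exact: dvdn_lcmr.
Qed.

Lemma alpha_pos : (0 < alpha n k t)%N.
Proof. by have [] := big_lcm (leqnn K). Qed.

Lemma al_dvd_alpha j : (1 <= j < K)%N -> (al n t j %| alpha n k t)%N.
Proof. by have [_] := big_lcm (leqnn K); apply. Qed.

Lemma A_pos : (0 < A)%N.
Proof. rewrite /alpha' muln_gt0 alpha_pos andbT; lia. Qed.

Lemma dvd_A j : (1 <= j <= K)%N -> (al n t j.-1 * al n t j %| A)%N.
Proof.
move=> hj.
case: j hj => [|j] hj; first lia.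
case: j hj => [|j] hj.
  rewrite [1.-1]/= al_0 mul1n /alpha'.
  case: (ltnP 1 K) => h1.
    by apply: dvdn_mull; apply: al_dvd_alpha; lia.
  have -> : 1%N = K by lia.
  by rewrite al_K dvdn_mulr.
rewrite [j.+2.-1]/= (al_S (j:=j.+1)) //.
case: (ltnP j.+2 K) => h2.
  rewrite mulnC Gauss_dvd; last by rewrite coprime_sym coprimeSn.
  rewrite -al_S; last lia; last lia.
  rewrite !dvdn_mull ?al_dvd_alpha //; lia.
have e : j.+2 = K by lia.
rewrite -al_S; last lia; last lia.
rewrite e al_K /alpha' mulnC; apply: dvdn_mul => //.
apply: al_dvd_alpha; lia.
Qed.

Lemma ncols0 : ncols n k t 0 = 0%N.
Proof using. clear htk hkn. by rewrite /ncols big_geq. Qed.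

Lemma ncolsS l : ncols n k t l.+1 = (ncols n k t l + width n k t l.+1)%N.
Proof using. clear htk hkn.
rewrite /ncols big_nat_recr //=.
Qed.

Lemma ncols_mono l l' : (l <= l')%N -> (ncols n k t l <= ncols n k t l')%N.
Proof using. clear htk hkn.
move=> h; rewrite -(subnKC h); elim: (l' - l)%N => [|d IH]; first by rewrite addn0.
by rewrite addnS ncolsS; apply: leq_trans IH (leq_addr _ _).
Qed.

Lemma ncols_al j : (1 <= j <= K)%N -> (ncols n k t j * al n t j = A)%N.
Proof.
elim: j => [|j IH] hj; first lia.
case: j IH hj => [|j] IH hj.
  rewrite ncolsS ncols0 add0n /width /= mul1n divnK //.
  by have := dvd_A (j:=1); rewrite /= mul1n; apply; lia.
have IH' := IH ltac:(lia).
have hd := dvd_A (j:=j.+2) ltac:(lia).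
move: hd; rewrite [j.+2.-1]/= => /dvdnP [q hq].
have hS := al_S (j:=j.+1) ltac:(lia) ltac:(lia).
rewrite ncolsS /width [j.+2.-1]/= hq mulnK; last first.
  rewrite muln_gt0 !al_pos //; lia.
move: IH'; rewrite hq hS => IH'.
have e : ncols n k t j.+1 = (q * al n t j.+2)%N.
  apply/eqP; rewrite -(eqn_pmul2r (m := (al n t j.+2).+1)) //.
  by rewrite IH' -mulnA (mulnC (al n t j.+2)).
rewrite e mulnDl -mulnA mulnC; lia.
Qed.

Lemma width_al j : (2 <= j <= K)%N -> (width n k t j * al n t j = ncols n k t j.-1)%N.
Proof.
move=> hj.
have hp : (0 < al n t j.-1)%N by apply: al_pos; lia.
apply/eqP; rewrite -(eqn_pmul2r hp) ncols_al; last lia.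
rewrite /width -mulnA [(al _ _ j * _)%N]mulnC divnK //; apply: dvd_A; lia.
Qed.

Lemma ncols_K : ncols n k t K = alpha n k t.
Proof.
have := ncols_al (j:=K) ltac:(lia); rewrite al_K /alpha' mulnC => /eqP.
by rewrite eqn_pmul2l ?subn_gt0 // => /eqP.
Qed.

Lemma find_block c j : (c < ncols n k t j)%N ->
  exists l, (l < j)%N /\ (ncols n k t l <= c < ncols n k t l.+1)%N.
Proof using. clear htk hkn.
elim: j => [|j IH]; first by rewrite ncols0.
case: (ltnP c (ncols n k t j)) => h1 h2.
  by have [l [h3 h4]] := IH h1; exists l; split => //; lia.
by exists j; rewrite h1 h2.
Qed.

End Arith.

Set Implicit Arguments. Unset Strict Implicit.
Set Default Proof Using "All".
Local Open Scope ring_scope.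

Section McatLemmas.
Variable F : finFieldType.
Variables n k t m i : nat.
Hypothesis htk : (t < k)%N.
Hypothesis hkn : (k <= n)%N.
Local Notation K := (n - k).+1.
Local Notation A := (alpha' n k t).
Local Notation N := (alpha' n k t * m)%N.
Local Notation M := (Mcat F n k t m i).

Lemma McatS rnd l r c : M rnd l.+1 r c =
  if (c < ncols n k t l)%N then M rnd l r c else
  if (r < al n t l.+1)%N then
    (if l is 0 then evec F n k t m i ((c - ncols n k t l) * al n t l.+1 + r)
     else M rnd l (n - l.+1 + 1) ((c - ncols n k t l) * al n t l.+1 + r))
  else if (r < al n t l.+1 + t)%N then rnd (r - al n t l.+1)%N c else 0.
Proof. by []. Qed.

Lemma Mcat_stable rnd l l' r c : (c < ncols n k t l)%N -> (l <= l')%N ->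
  M rnd l' r c = M rnd l r c.
Proof.
move=> hc hl; rewrite -(subnKC hl); elim: (l' - l)%N => [|d IH]; first by rewrite addn0.
rewrite addnS /= ifT //; apply: leq_trans hc (ncols_mono _ _ _ _); lia.
Qed.

Lemma Mcat_zero rnd l r c : (l < K)%N -> (ncols n k t l <= c)%N -> (n - l <= r)%N ->
  M rnd l.+1 r c = 0.
Proof.
move=> hl hc hr /=; rewrite ifN; last by rewrite -leqNgt.
rewrite ifN; last by rewrite /al /=; lia.
rewrite ifN //; rewrite /al /=; lia.
Qed.

Lemma Mcat_rnd rnd l r c : (ncols n k t l <= c)%N ->
  (al n t l.+1 <= r < al n t l.+1 + t)%N ->
  M rnd l.+1 r c = rnd (r - al n t l.+1)%N c.
Proof.
move=> hc /andP[h1 h2] /=; rewrite ifN; last by rewrite -leqNgt.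
by rewrite ifN ?h2 // -leqNgt.
Qed.

Lemma Mcat_D rnd l r c : (ncols n k t l.+1 <= c)%N -> (r < al n t l.+2)%N ->
  (l.+2 <= n)%N ->
  M rnd l.+2 r c = M rnd l.+1 (n - l.+1)%N ((c - ncols n k t l.+1) * al n t l.+2 + r)%N.
Proof.
move=> hc hr hln; rewrite McatS ifN; last by rewrite -leqNgt.
by rewrite hr; congr (M _ _ _ _); lia.
Qed.

Lemma Mcat_E rnd r c : (r < al n t 1)%N -> M rnd 1 r c = evec F n k t m i (c * al n t 1 + r)%N.
Proof. by move=> hr /=; rewrite ncols0 /= subn0 hr. Qed.

Lemma Mcat_dep rnd rnd' l : (l <= K)%N ->
  (forall s c, (c < ncols n k t l)%N -> rnd s c = rnd' s c) ->
  forall r c, (c < ncols n k t l)%N -> M rnd l r c = M rnd' l r c.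
Proof.
elim: l => [|l IH] hl hR r c hc; first by [].
have hR' : forall s c, (c < ncols n k t l)%N -> rnd s c = rnd' s c.
  move=> s c' h; apply: hR; rewrite ncolsS; lia.
case: (ltnP c (ncols n k t l)) => h1.
  by rewrite !McatS !ifT // IH //; lia.
have h1' : (c < ncols n k t l)%N = false by rewrite ltnNge h1.
rewrite !McatS h1'.
case: ifP => h2.
  clear h1'; case: l IH hl hR hR' h1 hc h2 => [|l] IH hl hR hR' h1 hc h2 //.
  apply: IH => //; first lia.
  have hw := width_al htk hkn (j:=l.+2) ltac:(lia).
  rewrite [l.+2.-1]/= in hw.
  rewrite -hw.
  have : (c - ncols n k t l.+1 < width n k t l.+2)%N.
    move: hc; rewrite ncolsS; lia.
  move=> h3.
  have : ((c - ncols n k t l.+1).+1 * al n t l.+2 <= width n k t l.+2 * al n t l.+2)%N.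
    by apply: leq_mul.
  rewrite mulSn; lia.
case: ifP => // _; apply: hR => //.
Qed.

Lemma Mcat_diff rnd rnd' l r c : (l < K)%N -> (ncols n k t l <= c < ncols n k t l.+1)%N ->
  (forall s c', (c' < c)%N -> rnd s c' = rnd' s c') ->
  M rnd l.+1 r c - M rnd' l.+1 r c =
  if (al n t l.+1 <= r < al n t l.+1 + t)%N then rnd (r - al n t l.+1)%N c - rnd' (r - al n t l.+1)%N c else 0.
Proof.
move=> hl /andP[hc1 hc] hR.
have h1' : (c < ncols n k t l)%N = false by rewrite ltnNge hc1.
rewrite !McatS h1'.
case: ifP => h2.
  rewrite ifN; last by rewrite negb_and -ltnNge h2.
  apply/eqP; rewrite subr_eq0; apply/eqP.
  clear h1'; case: l hl hR hc1 hc h2 => [|l] hl hR hc1 hc h2 //.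
  apply: Mcat_dep; first lia.
    move=> s c' h; apply: hR; lia.
  have hw := width_al htk hkn (j:=l.+2) ltac:(lia).
  rewrite [l.+2.-1]/= in hw.
  rewrite -hw.
  have : (c - ncols n k t l.+1 < width n k t l.+2)%N.
    move: hc; rewrite ncolsS; lia.
  move=> h3.
  have : ((c - ncols n k t l.+1).+1 * al n t l.+2 <= width n k t l.+2 * al n t l.+2)%N.
    by apply: leq_mul.
  rewrite mulSn; lia.
have h2' : (al n t l.+1 <= r)%N by rewrite leqNgt h2.
rewrite h2' /=.
case: ifP => // _; by rewrite subrr.
Qed.

End McatLemmas.

Set Implicit Arguments. Unset Strict Implicit.
Local Open Scope ring_scope.

Lemma interp (F : finFieldType) n (a : 'I_n -> F) (S : {set 'I_n}) (d N : nat) (w : nat -> F) :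
  injective a -> (d <= #|S|)%N -> (d <= N)%N -> (forall r, (d <= r)%N -> w r = 0) ->
  (forall l, l \in S -> \sum_(r < N) w r * a l ^+ r = 0) -> forall r, w r = 0.
Proof.
move=> ia hS hN hw hsum.
have hsum' : forall x, \sum_(r < N) w r * x ^+ r = (\poly_(r < d) w r).[x].
  move=> x; rewrite horner_poly (big_ord_widen N (fun r => w r * x ^+ r) hN) [RHS]big_mkcond /=.
  apply: eq_bigr => r _; case: ifP => // h; rewrite hw ?mul0r //; lia.
have p0 : \poly_(r < d) w r = 0.
  case: (eqVneq (\poly_(r < d) w r) 0) => // hp; exfalso.
  have H := max_poly_roots hp (rs := [seq a l | l in S]).
  have : (size [seq a l | l in S] < size (\poly_(r < d) w r))%N.
    apply: H; last by rewrite map_inj_uniq ?enum_uniq.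
    apply/allP => x /mapP [l]; rewrite mem_enum => hl ->.
    by rewrite /root -hsum' hsum.
  rewrite size_map -cardE ltnNge (leq_trans (size_poly _ _) hS) //.
move=> r; case: (ltnP r d) => h; last exact: hw.
by have := coef_poly d w r; rewrite p0 coef0 h => ->.
Qed.

Section Dot.
Variable F : finFieldType.
Variables n k t m : nat.
Local Notation N := (alpha' n k t * m)%N.

Lemma dot_sum nn (s : 'I_nn -> F) (v : 'I_nn -> 'rV[F]_N) x :
  dot (\sum_(r < nn) s r *: v r : 'rV[F]_N) x = \sum_(r < nn) s r * dot (v r) x.
Proof.
rewrite /dot.
under eq_bigr => p _ do rewrite summxE mulr_suml.
rewrite exchange_big /=; apply: eq_bigr => r _.
rewrite mulr_sumr; apply: eq_bigr => p _; by rewrite mxE mulrA.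
Qed.

Lemma dotB (q : 'rV[F]_N) (x y : 'rV[F]_N) : dot q (x - y) = dot q x - dot q y.
Proof.
rewrite /dot -sumrB; apply: eq_bigr => p _; by rewrite !mxE mulrBr.
Qed.

Lemma dot0 x : dot (0 : 'rV[F]_N) x = 0.
Proof. rewrite /dot big1 // => p _; by rewrite mxE mul0r. Qed.

End Dot.

Set Implicit Arguments. Unset Strict Implicit.
Set Default Proof Using "All".
Local Open Scope ring_scope.

Section Decode.
Variable F : finFieldType.
Variables n k t m i : nat.
Hypothesis htk : (t < k)%N.
Hypothesis hkn : (k <= n)%N.
Local Notation K := (n - k).+1.
Local Notation A := (alpha' n k t).
Local Notation N := (alpha' n k t * m)%N.
Local Notation M := (Mcat F n k t m i).

Lemma answerE rnd a z l c : answer F n k t m i rnd a z l c =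
  \sum_(r < n) dot (Mmat F n k t m i rnd r c) z * a l ^+ r.
Proof.
rewrite /answer /query dot_sum; apply: eq_bigr => r _; by rewrite mulrC.
Qed.

Lemma decode_zero (a : 'I_n -> F) rnd (L : {set 'I_n}) mu (z : 'rV[F]_N) :
  injective a -> (k <= mu <= n)%N -> #|L| = mu ->
  (forall l c, l \in L -> (c < ncols n k t (n - mu).+1)%N -> answer F n k t m i rnd a z l c = 0) ->
  forall j, (j < A)%N -> dot (evec F n k t m i j) z = 0.
Proof.
move=> ia /andP[hmu1 hmu2] hL hans.
set j0 := (n - mu).+1.
set w := fun r c => dot (Mmat F n k t m i rnd r c) z.
have main : forall e c, (ncols n k t j0 - c <= e)%N -> (c < ncols n k t j0)%N ->
    forall r, w r c = 0.
  elim=> [|e IH] c he hc; first lia.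
  have hIH : forall c'', (c < c'' < ncols n k t j0)%N -> forall r, w r c'' = 0.
    move=> c'' /andP[h1 h2]; apply: IH => //; lia.
  have [l [hl /andP[hc1 hc2]]] := find_block hc.
  have hhi : forall r, (mu <= r)%N -> w r c = 0.
    move=> r hr; case: (leqP (n - l) r) => hr2.
      rewrite /w /Mmat (Mcat_stable i htk hkn rnd (l := l.+1)) //; last lia.
      by rewrite (Mcat_zero i htk hkn) ?dot0 //; lia.
    have hr3 : (r < n)%N by lia.
    set l3 := (n - r).-1.
    have hl3 : (n - r = l3.+1)%N by rewrite /l3; lia.
    have hl3K : (l3.+2 <= j0)%N by rewrite /j0; lia.
    have hll3 : (l <= l3)%N by lia.
    have hap : (0 < al n t l3.+2)%N by apply: (al_pos htk hkn); lia.
    set c'' := (ncols n k t l3.+1 + c %/ al n t l3.+2)%N.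
    set r' := (c %% al n t l3.+2)%N.
    have hwa := width_al htk hkn (j:=l3.+2) ltac:(lia).
    rewrite [l3.+2.-1]/= in hwa.
    have hcl3 : (c < ncols n k t l3.+1)%N.
      apply: leq_trans hc2 (ncols_mono _ _ _ _); lia.
    have hc''1 : (c'' < ncols n k t l3.+2)%N.
      rewrite ncolsS /c'' ltn_add2l ltn_divLR // hwa //.
    have hc''2 : (ncols n k t l3.+1 <= c'')%N by rewrite /c'' leq_addr.
    have -> : w r c = w r' c''.
      rewrite /w /Mmat [in RHS](Mcat_stable i htk hkn rnd (l := l3.+2)) //; last lia.
      rewrite (Mcat_D i htk hkn) ?/r' ?ltn_mod //; try lia.
      have -> : (c'' - ncols n k t l3.+1 = c %/ al n t l3.+2)%N by rewrite /c''; lia.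
      rewrite -?divn_eq -hl3 subKn; last lia.
      by rewrite (Mcat_stable i htk hkn rnd (l := l3.+1)) ?hl3 //; lia.
    apply: hIH; apply/andP; split.
      have := ncols_mono n k t (_ : (l.+1 <= l3.+1)%N); lia.
    have := ncols_mono n k t (_ : (l3.+2 <= j0)%N); lia.
  apply: (@interp F n a L mu n (fun r => w r c)) => //; first by rewrite hL.
  move=> l' hl'; have := hans l' c hl' hc; by rewrite answerE.
have h1 : (0 < al n t 1)%N by apply: (al_pos htk hkn); lia.
move=> j hj.
have hcA := ncols_al htk hkn (j := 1) ltac:(lia).
have hc : (j %/ al n t 1 < ncols n k t 1)%N by rewrite ltn_divLR // hcA.
rewrite (divn_eq j (al n t 1)) -(Mcat_E i htk hkn rnd) ?ltn_mod //.
rewrite -(Mcat_stable i htk hkn rnd (l' := K)) //.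
have hc0 : (j %/ al n t 1 < ncols n k t j0)%N.
  apply: leq_trans hc (ncols_mono _ _ _ _); rewrite /j0; lia.
by have := main _ _ (leq_subr (j %/ al n t 1)%N (ncols n k t j0)) hc0 (j %% al n t 1)%N.
Qed.

End Decode.

Set Implicit Arguments. Unset Strict Implicit.
Set Default Proof Using "All".
Local Open Scope ring_scope.

Section Priv.
Variable F : finFieldType.
Variables n k t m i : nat.
Hypothesis htk : (t < k)%N.
Hypothesis hkn : (k <= n)%N.
Local Notation K := (n - k).+1.
Local Notation A := (alpha' n k t).
Local Notation N := (alpha' n k t * m)%N.

Lemma RnatE (R : rand_t F n k t m) (s : 'I_t) (c : 'I_(alpha n k t)) :
  Rnat R s c = R (s, c).
Proof. by rewrite /Rnat !valK. Qed.

Lemma Rnat_agree (R R' : rand_t F n k t m) c0 :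
  (forall (s : 'I_t) (c : 'I_(alpha n k t)), (c < c0)%N -> R (s, c) = R' (s, c)) ->
  forall s c, (c < c0)%N -> Rnat R s c = Rnat R' s c.
Proof.
move=> H s c hc; rewrite /Rnat.
case: (insubP ('I_t) s) => [s' _ es|_]; case: (insubP ('I_(alpha n k t)) c) => [c' _ ec|_] //.
by apply: H; rewrite ec.
Qed.

Lemma shift_sum (g : nat -> F) nn al0 : (al0 <= nn)%N -> (forall r, (r < al0)%N -> g r = 0) ->
  \sum_(r < nn) g r = \sum_(s < nn - al0) g (s + al0)%N.
Proof.
move=> h hg.
rewrite -(big_mkord xpredT) (big_cat_nat _ (n := al0)) //= big_nat_cond big1; last first.
  by move=> r /andP[/andP[_ hr] _]; apply: hg.
rewrite add0r.
have := big_addn 0 nn al0 xpredT g; rewrite add0n => ->.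
by rewrite big_mkord.
Qed.

Lemma priv_inj (a : 'I_n -> F) (T : {set 'I_n}) (R R' : rand_t F n k t m) :
  injective a -> (forall l, a l != 0) -> #|T| = t ->
  (forall l c, l \in T -> (c < alpha n k t)%N ->
     query F n k t m i (Rnat R) a l c = query F n k t m i (Rnat R') a l c) -> R = R'.
Proof.
move=> ia a0 hT hq.
suff H : forall c0 (s : 'I_t) (c : 'I_(alpha n k t)), (c < c0)%N -> R (s, c) = R' (s, c).
  by apply/ffunP => -[s c]; apply: (H c.+1).
elim=> [|c0 IH] s c hc; first by [].
case: (ltnP c c0) => hc0; first exact: IH.
have ec : nat_of_ord c = c0 by lia.
have hag := Rnat_agree IH.
have hcK : (c < ncols n k t K)%N by rewrite ncols_K.
have [l [hl /andP[hb1 hb2]]] := find_block hcK.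
set al1 := al n t l.+1.
have hal : (al1 + t <= n)%N by rewrite /al1 /al /=; lia.
have hdiff : forall r, Mmat F n k t m i (Rnat R) r c - Mmat F n k t m i (Rnat R') r c =
    if (al1 <= r < al1 + t)%N then Rnat R (r - al1)%N c - Rnat R' (r - al1)%N c else 0.
  move=> r; rewrite /Mmat !(Mcat_stable i htk hkn _ (l := l.+1)) //; try lia.
  apply: Mcat_diff => //; first by rewrite hb1.
  move=> s' c' h; apply: hag; lia.
apply/rowP => p.
set d := fun s0 => (Rnat R s0 c - Rnat R' s0 c) 0 p.
set w := fun s0 => if (s0 < t)%N then d s0 else 0.
suff hw : forall s0, w s0 = 0.
  have := hw s; rewrite /w /d ltn_ord !RnatE !mxE => /eqP; rewrite subr_eq0 => /eqP.
  by [].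
apply: (@interp F n a T t (n - al1) w) => //; first by rewrite hT.
- lia.
- by move=> r hr; rewrite /w ifN // -leqNgt.
move=> l' hl'.
have := hq l' c hl' (ltn_ord c).
move/eqP; rewrite -subr_eq0 /query -sumrB => /eqP hq0.
have := congr1 (fun M : 'rV[F]_N => M 0 p) hq0.
rewrite /= summxE mxE.
move=> H0.
rewrite (eq_bigr (fun r : 'I_n => a l' ^+ r * (if (al1 <= r < al1 + t)%N then Rnat R (r - al1)%N c - Rnat R' (r - al1)%N c else 0) 0 p)) in H0; last first.
  by move=> r _; rewrite -scalerBr hdiff mxE.
move: H0.
rewrite (shift_sum (g := fun r : nat => a l' ^+ r * (if (al1 <= r < al1 + t)%N then Rnat R (r - al1)%N c - Rnat R' (r - al1)%N c else 0) 0 p) (al0 := al1)); last 2 first.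
- lia.
- by move=> r hr; rewrite ifN ?mxE ?mulr0 // negb_and -ltnNge hr.
move=> H0.
have : a l' ^+ al1 * \sum_(s0 < n - al1) w s0 * a l' ^+ s0 = 0.
  apply: (etrans _ H0); rewrite mulr_sumr; apply: eq_bigr => r _.
  rewrite /w /d exprD leq_addl /= [(r + al1)%N]addnC ltn_add2l addKn.
  case: ifP => _; last by rewrite mxE mul0r !mulr0.
  by rewrite (mulrC _ (a l' ^+ r)) mulrA (mulrC (a l' ^+ al1)).
move/eqP; rewrite mulf_eq0 expf_eq0 (negbTE (a0 l')) andbF /= => /eqP.
by [].
Qed.

End Priv.

End StairHelpers.
Import StairHelpers.
Unset Implicit Arguments.
Set Strict Implicit.
Close Scope ring_scope.

Theorem theorem1 (F : finFieldType) (n k t m : nat) (a : 'I_n -> F) :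
  (1 <= t)%N -> (t < k)%N -> (k <= n)%N -> (1 <= m)%N ->
  (n < #|F|)%N -> injective a -> (forall l, a l != 0%R) ->
  (forall (T : {set 'I_n}), #|T| = t ->
   forall (i i' : 'I_m) (Qv : 'I_n -> 'I_(alpha n k t) -> 'rV[F]_(alpha' n k t * m)),
     #|[set R : rand_t F n k t m |
          [forall l in T, forall c : 'I_(alpha n k t),
             query F n k t m (val i) (Rnat R) a l c == Qv l c]]|
     = #|[set R : rand_t F n k t m |
          [forall l in T, forall c : 'I_(alpha n k t),
             query F n k t m (val i') (Rnat R) a l c == Qv l c]]|)
  /\
  (forall mu : nat, (k <= mu <= n)%N ->
   forall L : {set 'I_n}, #|L| = mu ->
     ((mu - t) %| alpha' n k t)%N
     /\ (forall (i : 'I_m) (R : rand_t F n k t m),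
          exists dec : ('I_n -> nat -> F) -> nat -> F,
          forall x : 'rV[F]_(alpha' n k t * m), forall j : nat, (j < alpha' n k t)%N ->
            dec (fun l c => if (l \in L) && (c < alpha' n k t %/ (mu - t))%N
                            then answer F n k t m (val i) (Rnat R) a x l c else 0%R) j
            = dot (evec F n k t m (val i) j) x)
     /\ ((alpha' n k t)%:R / (mu * (alpha' n k t %/ (mu - t)))%N%:R
         = 1 - t%:R / mu%:R :> rat)%R).
Proof.
move=> ht htk hkn hm hq ia a0; split.
  move=> T hT i i' Qv.
  suff H : forall i0 : nat, #|[set R : rand_t F n k t m |
          [forall l in T, forall c : 'I_(alpha n k t),
             query F n k t m i0 (Rnat R) a l c == Qv l c]]| = 1%N.
    by rewrite !H.
  move=> i0.
  pose e := fun s : 'I_t => enum_val (A := T) (cast_ord (esym hT) s).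
  have eT : forall s, e s \in T by move=> s; exact: enum_valP.
  have es : forall l (hl : l \in T), e (cast_ord hT (enum_rank_in hl l)) = l.
    by move=> l hl; rewrite /e cast_ordK enum_rankK_in.
  pose G := fun R : rand_t F n k t m =>
    ([ffun sc : 'I_t * 'I_(alpha n k t) => query F n k t m i0 (Rnat R) a (e sc.1) sc.2] : rand_t F n k t m).
  have Ginj : injective G.
    move=> R R' hG; apply: (priv_inj (i := i0) htk hkn ia a0 hT) => l c hl hc.
    have := congr1 (fun f : rand_t F n k t m => f (cast_ord hT (enum_rank_in hl l), Ordinal hc)) hG.
    by rewrite !ffunE /= es.
  have [g gK Kg] := injF_bij Ginj.
  pose y := ([ffun sc : 'I_t * 'I_(alpha n k t) => Qv (e sc.1) sc.2] : rand_t F n k t m).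
  have -> : [set R : rand_t F n k t m |
          [forall l in T, forall c : 'I_(alpha n k t),
             query F n k t m i0 (Rnat R) a l c == Qv l c]] = [set g y].
    apply/setP => R; rewrite !inE; apply/idP/eqP.
      move=> H; rewrite -(gK R); congr g; apply/ffunP => -[s c]; rewrite !ffunE /=.
      have := forallP H (e s); rewrite eT /= => /forallP /(_ c) /eqP.
      by [].
    move=> ->; apply/forallP => l; apply/implyP => hl; apply/forallP => c.
    have := congr1 (fun f : rand_t F n k t m => f (cast_ord hT (enum_rank_in hl l), c)) (Kg y).
    by rewrite /G !ffunE /= es => ->.
  by rewrite cards1.
move=> mu /andP[hmu1 hmu2] L hL.
set j0 := (n - mu).+1.
have hal : al n t j0 = (mu - t)%N by rewrite /al /j0 /=; lia.
have hncols : (ncols n k t j0 * (mu - t))%N = alpha' n k t.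
  by rewrite -hal ncols_al //; rewrite /j0; lia.
have hB : (alpha' n k t %/ (mu - t))%N = ncols n k t j0.
  by rewrite -hncols mulnK // subn_gt0; lia.
split; first by rewrite -hncols dvdn_mull.
split.
  move=> i R.
  pose resp := fun (x : 'rV[F]_(alpha' n k t * m)) (l : 'I_n) (c : nat) =>
     if (l \in L) && (c < alpha' n k t %/ (mu - t))%N
     then answer F n k t m (val i) (Rnat R) a x l c else 0%R.
  exists (fun ans j => match [pick x : 'rV[F]_(alpha' n k t * m) |
           [forall l : 'I_n, forall c : 'I_(alpha' n k t %/ (mu - t)), ans l c == resp x l c]] with
         | Some x => dot (evec F n k t m (val i) j) x | None => 0%R end).
  move=> x j hj.
  case: pickP => [x' Hx' | Hn]; last first.
    have := Hn x; rewrite /=.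
    suff -> : [forall l : 'I_n, forall c : 'I_(alpha' n k t %/ (mu - t)),
       (if (l \in L) && (c < alpha' n k t %/ (mu - t))%N
        then answer F n k t m (val i) (Rnat R) a x l c else 0%R) == resp x l c] by [].
    by apply/forallP => l; apply/forallP => c.
  apply/eqP; rewrite -subr_eq0 -dotB; apply/eqP.
  have hmu : (k <= mu <= n)%N by rewrite hmu1 hmu2.
  apply: (decode_zero (i := val i) htk hkn (rnd := Rnat R) ia hmu hL) => // l c hl hc.
  rewrite /answer dotB -/(answer F n k t m (val i) (Rnat R) a x' l c)
          -/(answer F n k t m (val i) (Rnat R) a x l c).
  have hc' : (c < alpha' n k t %/ (mu - t))%N by rewrite hB.
  have := forallP Hx' l => /forallP /(_ (Ordinal hc')) /eqP.
  rewrite /resp /= hl hc' /= => ->.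
  by rewrite subrr.
rewrite hB -hncols natrM natrB; last lia.
have hmu0 : (mu%:R : rat) != 0%R by rewrite pnatr_eq0; lia.
have hA := A_pos htk hkn.
have hc0 : ((ncols n k t j0)%:R : rat) != 0%R.
  rewrite pnatr_eq0; apply/eqP => h; move: hA; rewrite -hncols h; lia.
rewrite natrM; field.
by rewrite hmu0 hc0.
Qed.
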